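(* Let $N, M \ge 1$ be integers, let $t_1,\ldots,t_N$ be real time points and $f_1,\ldots,f_M$ real frequencies, and let $B\in\mathbb{C}^{N\times M}$ have entries $B_{k,m}=\exp(-i2\pi f_m t_k)$. Let $A=\left[\mathbf{1}_N\ \ \mathrm{Re}(B)\ \ \mathrm{Im}(B)\right]\in\mathbb{R}^{N\times(2M+1)}$, where $\mathbf{1}_N$ is the all-ones column vector. Let $\sigma^2>0$, let $\alpha_0,\alpha_1,\ldots,\alpha_M>0$, and let $\Gamma=\mathrm{diag}(\alpha_0,\alpha_1,\ldots,\alpha_M,\alpha_1,\ldots,\alpha_M)$. Let $\Omega=\{1,\ldots,N\}$. For $J\subseteq\Omega$ let $P_J\in\mathbb{R}^{N\times N}$ be the diagonal matrix with $(P_J)_{kk}=1$ if $k\in J$ and $0$ otherwise, and define $$\Sigma^{(J)}_{post_y}=\sigma^2 I_N + A\left(\tfrac{1}{\sigma^2}A^TP_JA+\Gamma^{-1}\right)^{-1}A^T,\qquad \Sigma_y=\sigma^2 I_N + A\Gamma A^T,$$ $$f(J)=\mathrm{tr}(\Sigma_y)-\mathrm{tr}\left(\Sigma^{(J)}_{post_y}\right),$$ and for $i\in\Omega$ the marginal gain $f_i(J)=f(J\cup\{i\})-f(J)$. Then $f_i(J)>0$ for all $J\subset\Omega$ and all $i\in\Omega\setminus J$.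
   Context: Here $\mathrm{Re}(B)$ and $\mathrm{Im}(B)$ denote the entrywise real and imaginary parts of $B$, and $\mathrm{tr}$ denotes the matrix trace. The matrix $\Sigma^{(J)}_{post_y}$ is the posterior predictive covariance of a Bayesian linear model $Y=AX+\text{noise}$ with prior covariance $\Gamma$ on $X$, noise variance $\sigma^2$, and observations only at the time indices in $J$. *)

(* Defs.v *)
From HB Require Import structures.
From mathcomp Require Import all_boot all_order all_algebra.
From mathcomp Require Import reals trigo.
Set Implicit Arguments. Unset Strict Implicit. Unset Printing Implicit Defensive.
Import Order.TTheory GRing.Theory Num.Theory.
Local Open Scope ring_scope.

Section Model.
Variables (R : realType) (N M : nat).
Variables (t : 'I_N -> R) (fr : 'I_M -> R).

(* B_{k,m} = exp(-i 2 pi f_m t_k): Re = cos(2 pi f_m t_k), Im = - sin(2 pi f_m t_k) *)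
Definition ReB : 'M[R]_(N, M) := \matrix_(k, m) cos (2 * pi * fr m * t k).
Definition ImB : 'M[R]_(N, M) := \matrix_(k, m) - sin (2 * pi * fr m * t k).

Definition Amx : 'M[R]_(N, 1 + (M + M)) :=
  row_mx (const_mx 1) (row_mx ReB ImB).

Definition Gamma (a0 : R) (a : 'I_M -> R) : 'M[R]_(1 + (M + M)) :=
  diag_mx (row_mx (a0%:M : 'M[R]_1) (row_mx (\row_m a m) (\row_m a m))).

Definition PJ (J : {set 'I_N}) : 'M[R]_N := diag_mx (\row_k (k \in J)%:R).

Definition Sigma_post (s2 a0 : R) (a : 'I_M -> R) (J : {set 'I_N}) : 'M[R]_N :=
  s2%:M + Amx *m invmx (s2^-1 *: (Amx^T *m PJ J *m Amx) + invmx (Gamma a0 a)) *m Amx^T.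

Definition Sigma_y (s2 a0 : R) (a : 'I_M -> R) : 'M[R]_N :=
  s2%:M + Amx *m Gamma a0 a *m Amx^T.

Definition fgain (s2 a0 : R) (a : 'I_M -> R) (J : {set 'I_N}) : R :=
  \tr (Sigma_y s2 a0 a) - \tr (Sigma_post s2 a0 a J).

Definition marginal_gain (s2 a0 : R) (a : 'I_M -> R) (i : 'I_N) (J : {set 'I_N}) : R :=
  fgain s2 a0 a (J :|: [set i]) - fgain s2 a0 a J.
End Model.

(* Main.v *)
Require Import Defs.
From HB Require Import structures.
From mathcomp Require Import all_boot all_order all_algebra.
From mathcomp Require Import reals trigo.
From mathcomp Require Import ring lra.
Import Order.TTheory GRing.Theory Num.Theory.
Local Open Scope ring_scope.

Section Core.
Variable R : realType.

Lemma qf_diag n (d : 'rV[R]_n) (u : 'rV_n) :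
  (u *m diag_mx d *m u^T) 0 0 = \sum_j d 0 j * u 0 j ^+ 2.
Proof.
rewrite mul_mx_diag !mxE; apply: eq_bigr => j _; rewrite !mxE; ring.
Qed.

Lemma sum_pos n (d : 'rV[R]_n) (u : 'rV_n) :
  (forall j, 0 < d 0 j) -> u != 0 -> 0 < \sum_j d 0 j * u 0 j ^+ 2.
Proof.
move=> hd hu.
case: (pickP (fun j => u 0 j != 0)) => [j hj|h]; last first.
  case/negP: hu; apply/eqP/rowP => j; move: (h j) => /negbFE/eqP ->.
  by rewrite mxE.
rewrite (bigD1 j) //=.
have h1 : 0 < d 0 j * u 0 j ^+ 2 by rewrite mulr_gt0 // exprn_even_gt0.
have h2 : 0 <= \sum_(k | k != j) d 0 k * u 0 k ^+ 2.
  by apply: sumr_ge0 => k _; rewrite mulr_ge0 ?sqr_ge0 // ltW.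
lra.
Qed.

Lemma PJ_qf N n (A : 'M[R]_(N, n)) (J : {set 'I_N}) (u : 'rV_n) :
  0 <= (u *m (A^T *m PJ R J *m A) *m u^T) 0 0.
Proof.
have -> : u *m (A^T *m PJ R J *m A) *m u^T
        = (u *m A^T) *m PJ R J *m (u *m A^T)^T.
  by rewrite trmx_mul trmxK !mulmxA.
rewrite /PJ qf_diag; apply: sumr_ge0 => k _.
by rewrite mxE mulr_ge0 ?ler0n ?sqr_ge0.
Qed.

Definition Qm N n (A : 'M[R]_(N, n)) (e : 'rV_n) c (J : {set 'I_N}) :=
  c *: (A^T *m PJ R J *m A) + diag_mx e.
Arguments Qm {N n}.

Lemma Q_pd N n (A : 'M[R]_(N, n)) (e : 'rV_n) c J (u : 'rV_n) :
  (forall j, 0 < e 0 j) -> 0 < c -> u != 0 ->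
  0 < (u *m Qm A e c J *m u^T) 0 0.
Proof.
move=> he hc hu.
rewrite /Qm mulmxDr mulmxDl -scalemxAr -scalemxAl mxE [X in X + _]mxE.
have := @PJ_qf _ _ A J u; have := @sum_pos _ e u he hu; rewrite -qf_diag => h1 h2.
have : 0 <= c * (u *m (A^T *m PJ R J *m A) *m u^T) 0 0 by rewrite mulr_ge0 // ltW.
lra.
Qed.

Lemma Q_unit N n (A : 'M[R]_(N, n)) (e : 'rV_n) c J :
  (forall j, 0 < e 0 j) -> 0 < c -> Qm A e c J \in unitmx.
Proof.
move=> he hc.
rewrite -row_free_unit -kermx_eq0; apply/eqP/row_matrixP => j; rewrite row0.
set r := row j _.
have hr : r *m Qm A e c J = 0 by rewrite /r -row_mul mulmx_ker row0.
apply/eqP; apply: contraT => hr0.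
have := @Q_pd _ _ A e c J r he hc hr0; rewrite hr mul0mx mxE ltxx //.
Qed.

Lemma Q_sym N n (A : 'M[R]_(N, n)) (e : 'rV_n) c J :
  (Qm A e c J)^T = Qm A e c J.
Proof.
by rewrite /Qm linearD /= linearZ /= tr_diag_mx !trmx_mul trmxK /PJ tr_diag_mx mulmxA.
Qed.

Lemma PJ_add N (J : {set 'I_N}) i : i \notin J ->
  PJ R (J :|: [set i]) = PJ R J + delta_mx i i.
Proof.
move=> hi; apply/matrixP => k l; rewrite !mxE in_setU in_set1.
case: (eqVneq k l) => [<-|hkl]; last first.
  rewrite !mulr0n add0r; case: (eqVneq k i) => [Hk|hki]; last by rewrite andFb.
  by rewrite -Hk eq_sym (negbTE hkl) andbF.
rewrite !mulr1n andbb; case: (eqVneq k i) => [->|hki].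
  by rewrite (negbTE hi) /= add0r.
by rewrite orbF /= addr0.
Qed.

Lemma core N n (A : 'M[R]_(N, n)) (e : 'rV_n) c (J : {set 'I_N}) i :
  (forall j, 0 < e 0 j) -> 0 < c -> i \notin J -> row i A != 0 ->
  0 < \tr (A *m invmx (Qm A e c J) *m A^T)
      - \tr (A *m invmx (Qm A e c (J :|: [set i])) *m A^T).
Proof.
move=> he hc hi hA.
set a := row i A.
have hQ' : Qm A e c (J :|: [set i]) = Qm A e c J + c *: (a^T *m a).
  rewrite /Qm PJ_add // mulmxDr mulmxDl scalerDr addrAC; congr (_ + _ + _).
  congr (_ *: _); rewrite /a rowE trmx_mul -(mul_delta_mx (0 : 'I_1)).
  by rewrite trmx_delta !mulmxA.
have uQ := @Q_unit _ _ A e c J he hc.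
have uQ' := @Q_unit _ _ A e c (J :|: [set i]) he hc.
move: uQ'; rewrite hQ'; set Q := Qm A e c J; move=> uQ'.
set Q' := Q + _.
set X := invmx Q; set Y := invmx Q'.
have sX : X^T = X by rewrite /X trmx_inv /Q Q_sym.
set q := (a *m X *m a^T) 0 0.
have hq : 0 < q.
  have haX : a *m X != 0.
    apply: contraNneq hA => h; apply/eqP; by rewrite -/a -(mulmxKV uQ a) -/X h mul0mx.
  have := @Q_pd _ _ A e c J (a *m X) he hc haX.
  rewrite /q trmx_mul sX -/Q -!mulmxA (mulmxA Q) mulmxV // mul1mx //.
have hYa : Y *m a^T = (1 + c * q)^-1 *: (X *m a^T).
  have h1 : Q' *m (X *m a^T) = (1 + c * q) *: a^T.
    have hq' : (a *m (X *m a^T)) 0 0 = q by rewrite /q mulmxA.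
    rewrite /Q' mulmxDl mulmxA mulmxV // mul1mx scalemxAl -!mulmxA.
    rewrite [a *m (X *m a^T)]mx11_scalar mul_mx_scalar scalerA hq'.
    by rewrite scalerDl scale1r mulrC.
  have h2 : X *m a^T = (1 + c * q) *: (Y *m a^T).
    by rewrite scalemxAr -h1 mulmxA mulVmx // mul1mx.
  have hnz : 1 + c * q != 0 by rewrite gt_eqF //; have := mulr_gt0 hc hq; lra.
  by rewrite h2 scalerA mulVf // scale1r.
have hXY : X - Y = c *: (Y *m a^T *m (a *m X)).
  have -> : X - Y = Y *m (Q' - Q) *m X.
    by rewrite mulmxBr mulmxBl mulVmx // mul1mx (mulmxK uQ).
  rewrite /Q' addrAC subrr add0r -scalemxAr scalemxAl !mulmxA. by rewrite !scalemxAl.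
have e1 : A *m (Y *m a^T *m (a *m X)) *m A^T
        = (A *m Y *m a^T) *m (a *m X *m A^T) by rewrite !mulmxA.
set v := A *m (X *m a^T).
have hv : A *m Y *m a^T = (1 + c * q)^-1 *: v by rewrite -mulmxA hYa -scalemxAr.
have hw : a *m X *m A^T = v^T by rewrite /v !trmx_mul trmxK sX.
have hvi : v i 0 = q.
  rewrite /v /q -mulmxA !mxE; apply: eq_bigr => k _; by rewrite !mxE.
have hS : \tr (v^T *m v) = \sum_k v k 0 ^+ 2.
  rewrite /mxtrace big_ord1 mxE; apply: eq_bigr => k _; by rewrite mxE expr2.
have hSpos : 0 < \sum_k v k 0 ^+ 2.
  rewrite (bigD1 i) //= hvi.
  have h1 : 0 < q ^+ 2 by rewrite expr2 mulr_gt0.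
  have h2 : 0 <= \sum_(k | k != i) v k 0 ^+ 2 by apply: sumr_ge0 => k _; rewrite sqr_ge0.
  lra.
have -> : \tr (A *m X *m A^T) - \tr (A *m Y *m A^T)
          = c * ((1 + c * q)^-1 * \sum_k v k 0 ^+ 2).
  rewrite -raddfB /= -mulmxBl -mulmxBr hXY -scalemxAr -scalemxAl mxtraceZ e1.
  by rewrite mxtrace_mulC hv hw -scalemxAr mxtraceZ hS.
have hcq : 0 < 1 + c * q by have := mulr_gt0 hc hq; lra.
by rewrite mulr_gt0 // mulr_gt0 // invr_gt0.
Qed.
Lemma invmx_diag n (d : 'rV[R]_n) : (forall j, d 0 j != 0) ->
  invmx (diag_mx d) = diag_mx (\row_j (d 0 j)^-1).
Proof.
move=> hd.
have h : diag_mx d *m diag_mx (\row_j (d 0 j)^-1) = 1%:M.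
  rewrite mulmx_diag -diag_const_mx; congr diag_mx; apply/rowP => j.
  by rewrite !mxE mulfV.
have [u _] := mulmx1_unit h.
by rewrite -[RHS]mul1mx -(mulVmx u) -mulmxA h mulmx1.
Qed.
End Core.

Theorem lemma1 (R : realType) (N M : nat) (hN : (0 < N)%N) (hM : (0 < M)%N)
  (t : 'I_N -> R) (fr : 'I_M -> R) (s2 a0 : R) (a : 'I_M -> R)
  (hs2 : 0 < s2) (ha0 : 0 < a0) (ha : forall m, 0 < a m)
  (J : {set 'I_N}) (i : 'I_N) (hi : i \notin J) :
  0 < marginal_gain t fr s2 a0 a i J.
Proof.
set g := row_mx (a0%:M : 'M[R]_1) (row_mx (\row_m a m) (\row_m a m)).
have hg : forall j, 0 < g 0 j.
  move=> j; rewrite /g -[j]splitK; case: (split j) => k /=.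
    by rewrite row_mxEl mxE (ord1 k) eqxx mulr1n.
  rewrite row_mxEr -[k]splitK; case: (split k) => l /=.
    by rewrite row_mxEl mxE.
  by rewrite row_mxEr mxE.
have hGam : invmx (Gamma a0 a) = diag_mx (\row_j (g 0 j)^-1).
  by rewrite /Gamma invmx_diag // => j; rewrite gt_eqF.
have he : forall j, 0 < (\row_j (g 0 j)^-1) 0 j by move=> j; rewrite mxE invr_gt0.
have hA : row i (Amx t fr) != 0.
  apply/eqP => /rowP/(_ (lshift (M + M) (0 : 'I_1))).  
  rewrite /Amx mxE row_mxEl !mxE => /eqP; by rewrite oner_eq0.
have hc : 0 < s2^-1 by rewrite invr_gt0.
have := @core R _ _ (Amx t fr) _ s2^-1 J i he hc hi hA.
rewrite /marginal_gain /fgain /Sigma_post hGam !mxtraceD /Qm.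
lra.
Qed.
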